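(* Let $G=\mathrm{GL}_n$ over $L$ with diagonal torus $T$ and upper triangular Borel $B$, and let $Q=M\ltimes N$, $Q'=M'\ltimes N'$ be standard parabolic subgroups. Let $\nu\in X_*(Z_{M'})$ be a $B$-dominant cocharacter and let $w\in{}^{Q'}W^{Q}$. Put $Q^M_{w^{-1}}=M\cap w^{-1}Q'w$, a standard parabolic subgroup of $M$ with Levi $M_{w^{-1}}$, and $Q^{M'}_w=M'\cap wQw^{-1}$ with Levi $M'_w$. Then $w^{-1}\nu\in X_*(Z_{M_{w^{-1}}})$ and it is $(B\cap M)$-dominant. In particular the isomorphism $M'_w(L)\to M_{w^{-1}}(L)$, $m\mapsto w^{-1}mw$, maps $Z_{M'}^+$ into $Z_{M_{w^{-1}}}^+$.
   Context: $L/\mathbf Q_p$ finite with ring of integers $\mathcal O_L$ and uniformiser $\varpi_L$. $W$ is the Weyl group of $(G,T)$, $W_Q$ the Weyl group of $M$, and ${}^{Q'}W^Q$ the set of minimal length representatives of $W_{Q'}\backslash W/W_Q$. For a parabolic $P=M_P\ltimes N_P$ (of $G$ or of a Levi subgroup, standard with respect to the relevant Borel), $Z_{M_P}^+=\{z\in Z_{M_P}(L): zN_P(\mathcal O_L)z^{-1}\subset N_P(\mathcal O_L),\ z^{-1}\overline N_P^1z\subset\overline N_P^1\}$, where $\overline N_P^1$ is the kernel of reduction mod $\varpi_L$ on the opposite unipotent radical; $Z_{M_{w^{-1}}}^+$ is taken with respect to the parabolic $Q^M_{w^{-1}}$ of $M$. *)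

(* Defs.v *)
From HB Require Import structures.
From mathcomp Require Import all_boot all_order all_algebra all_fingroup.
Set Implicit Arguments. Unset Strict Implicit. Unset Printing Implicit Defensive.
Import Order.TTheory GRing.Theory Num.Theory.
Local Open Scope ring_scope.

(* Simple roots: alpha_k = e_k - e_{k+1}, indexed by k : 'I_n.-1.
   A standard parabolic / standard Levi is given by a set J of simple roots.
   Weyl group W = 'S_n; w acts on the permutation matrix side by
   w e_j = e_{w j}.  Cocharacters of T are X_*(T) = Z^n, nu : 'I_n -> int,
   nu(t) = diag(t^{nu_i}). *)

(* i and j lie in the same block of the standard Levi M_J *)
Definition blk (n : nat) (J : {set 'I_n.-1}) (i j : 'I_n) : bool :=
  [forall k : 'I_n.-1, ((minn i j <= k)%N && (k < maxn i j)%N) ==> (k \in J)].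

(* Weyl group W_J of M_J : permutation (matrices) lying in M_J *)
Definition Wgrp (n : nat) (J : {set 'I_n.-1}) : {set 'S_n} :=
  [set s : 'S_n | [forall i, blk J i (s i)]].

Definition len (n : nat) (w : 'S_n) : nat :=
  #|[set p : 'I_n * 'I_n | (p.1 < p.2)%N && (w p.2 < w p.1)%N]|.

(* ^{Q'}W^{Q}: minimal length representatives of W_{Q'} \ W / W_Q.
   In mathcomp (v * w * u) x = u (w (v x)), i.e. the function u o w o v,
   u in W_{Q'} on the left, v in W_Q on the right. *)
Definition minDCR (n : nat) (J' J : {set 'I_n.-1}) : {set 'S_n} :=
  [set w : 'S_n | [forall u in Wgrp J', forall v in Wgrp J,
                     (len w <= len (v * w * u)%g)%N]].

(* action of W on X_*(T): (w nu)(t) = w nu(t) w^{-1}, (w nu)_i = nu_{w^{-1} i} *)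
Definition cochar_act (n : nat) (w : 'S_n) (nu : 'I_n -> int) : 'I_n -> int :=
  fun i => nu ((w^-1)%g i).

(* nu in X_*(Z_M), M the standard Levi with block relation S *)
Definition cochar_in_center (n : nat) (S : rel 'I_n) (nu : 'I_n -> int) : Prop :=
  forall i j, S i j -> nu i = nu j.

(* dominance w.r.t. the Borel B \cap M (M with block relation R):
   <alpha, nu> >= 0 for the positive roots e_i - e_j (i < j) of M *)
Definition dominant (n : nat) (R : rel 'I_n) (nu : 'I_n -> int) : Prop :=
  forall i j : 'I_n, (i < j)%N -> R i j -> nu j <= nu i.

(* the block relation of M_{w^{-1}} = M \cap w^{-1} M' w *)
Definition Mw_rel (n : nat) (J J' : {set 'I_n.-1}) (w : 'S_n) : rel 'I_n :=
  fun i j => blk J i j && blk J' (w i) (w j).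

(* abstract discretely valued field data: O is a discrete valuation ring of L
   with uniformiser pi *)
Definition is_dvr (L : fieldType) (O : {pred L}) (pi : L) : Prop :=
  [/\ 0 \in O, 1 \in O,
      (forall x y, x \in O -> y \in O -> x + y \in O),
      (forall x, x \in O -> - x \in O) &
      (forall x y, x \in O -> y \in O -> x * y \in O)] /\
  [/\ pi \in O, pi^-1 \notin O &
      (forall x, x != 0 -> exists k : int, exists u,
         [/\ u \in O, u^-1 \in O & x = pi ^ k * u])].

(* Parabolic P inside the Levi with block relation R (R = all for G),
   standard w.r.t. B, with Levi block relation S (S refines R). *)
Definition Nrad (L : fieldType) (n : nat) (R S : rel 'I_n) (O : {pred L})
  (X : 'M[L]_n) : Prop :=
  forall i j : 'I_n,
    if i == j then X i j = 1
    else if [&& (i < j)%N, R i j & ~~ S i j] then is_true (X i j \in O) else X i j = 0.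

(* \bar N_P^1 : kernel of reduction mod pi on \bar N_P(O_L) *)
Definition Nbar1 (L : fieldType) (n : nat) (R S : rel 'I_n) (O : {pred L})
  (pi : L) (Y : 'M[L]_n) : Prop :=
  forall i j : 'I_n,
    if i == j then Y i j = 1
    else if [&& (j < i)%N, R i j & ~~ S i j]
         then exists y, y \in O /\ Y i j = pi * y
         else Y i j = 0.

Definition Zcenter (L : fieldType) (n : nat) (S : rel 'I_n) (z : 'M[L]_n) : Prop :=
  [/\ (forall i j : 'I_n, i != j -> z i j = 0), z \in unitmx &
      (forall i j : 'I_n, S i j -> z i i = z j j)].

Definition Zplus (L : fieldType) (n : nat) (R S : rel 'I_n) (O : {pred L})
  (pi : L) (z : 'M[L]_n) : Prop :=
  [/\ Zcenter S z,
      (forall X, Nrad R S O X -> Nrad R S O (z *m X *m invmx z)) &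
      (forall Y, Nbar1 R S O pi Y -> Nbar1 R S O pi (invmx z *m Y *m z))].

Definition pmx (L : fieldType) (n : nat) (w : 'S_n) : 'M[L]_n :=
  \matrix_(i, j) (i == w j)%:R.

Definition conj_inv (L : fieldType) (n : nat) (w : 'S_n) (m : 'M[L]_n) : 'M[L]_n :=
  invmx (pmx L w) *m m *m pmx L w.

(* Main.v *)
Require Import Defs.
From HB Require Import structures.
From mathcomp Require Import all_boot all_order all_algebra all_fingroup.
Import Order.TTheory GRing.Theory Num.Theory.
Local Open Scope ring_scope.
Set Implicit Arguments. Unset Strict Implicit.

Lemma invmx_eq (L : fieldType) n (A B : 'M[L]_n) : A *m B = 1%:M -> invmx A = B.
Proof.
move=> AB; have [uA _] := mulmx1_unit AB.
by rewrite -[invmx A]mulmx1 -AB mulmxA mulVmx // mul1mx.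
Qed.

Lemma pmxE (L : fieldType) n (w : 'S_n) : pmx L w = perm_mx w^-1.
Proof.
apply/matrixP => i j; rewrite !mxE.
by rewrite (canF_eq (permKV w)).
Qed.

Lemma conjE (L : fieldType) n (w : 'S_n) (z : 'M[L]_n) i j :
  conj_inv w z i j = z (w i) (w j).
Proof.
rewrite /conj_inv pmxE.
have -> : invmx (perm_mx w^-1 : 'M[L]_n) = perm_mx w.
  by apply: invmx_eq; rewrite -perm_mxM mulVg; apply/matrixP=> a b; rewrite !mxE perm1.
by rewrite -row_permE -col_permE !mxE.
Qed.

Definition isdiag (L : fieldType) n (A : 'M[L]_n) := forall a b : 'I_n, a != b -> A a b = 0.

Lemma diagl (L : fieldType) n m (A : 'M[L]_n) (X : 'M[L]_(n, m)) i j :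
  isdiag A -> (A *m X) i j = A i i * X i j.
Proof.
move=> dA; rewrite mxE (bigD1 i) //= big1 ?addr0 // => k kn.
by rewrite dA ?mul0r // eq_sym.
Qed.

Lemma diagr (L : fieldType) n m (A : 'M[L]_n) (X : 'M[L]_(m, n)) i j :
  isdiag A -> (X *m A) i j = X i j * A j j.
Proof.
move=> dA; rewrite mxE (bigD1 j) //= big1 ?addr0 // => k kn.
by rewrite dA ?mulr0.
Qed.

Lemma diag_nz (L : fieldType) n (A : 'M[L]_n) i :
  isdiag A -> A \in unitmx -> A i i != 0.
Proof.
move=> dA uA; apply/eqP => A0.
have := congr1 (fun M : 'M[L]_n => M i i) (mulmxV uA).
by rewrite /= diagl // A0 mul0r mxE eqxx /= => /eqP; rewrite eq_sym oner_eq0.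
Qed.

Definition dinv (L : fieldType) n (A : 'M[L]_n) : 'M[L]_n :=
  \matrix_(i, j) ((i == j)%:R * (A i i)^-1).

Lemma dinvE (L : fieldType) n (A : 'M[L]_n) i j : dinv A i j = (i == j)%:R * (A i i)^-1.
Proof. by rewrite mxE. Qed.

Lemma diag_inv (L : fieldType) n (A : 'M[L]_n) :
  isdiag A -> A \in unitmx -> invmx A = dinv A.
Proof.
move=> dA uA; apply: invmx_eq; apply/matrixP => i j.
rewrite diagl // dinvE mxE; case E: (_ == _); last by rewrite !mul0r mulr0.
by rewrite mul1r mulfV ?diag_nz.
Qed.

Lemma diag_invd (L : fieldType) n (A : 'M[L]_n) : isdiag (dinv A).
Proof. by move=> a b /negbTE ab; rewrite dinvE ab mul0r. Qed.

Lemma conj_entry (L : fieldType) n (A X : 'M[L]_n) i j :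
  isdiag A -> A \in unitmx -> (A *m X *m invmx A) i j = A i i * X i j * (A j j)^-1.
Proof.
move=> dA uA; rewrite diag_inv // (diagr _ _ _ (@diag_invd _ _ A)) (diagl X i j dA) dinvE eqxx mul1r.
by [].
Qed.

Lemma conj_entry' (L : fieldType) n (A X : 'M[L]_n) i j :
  isdiag A -> A \in unitmx -> (invmx A *m X *m A) i j = (A i i)^-1 * X i j * A j j.
Proof.
move=> dA uA; rewrite (diagr _ _ _ dA) diag_inv // (diagl X i j (@diag_invd _ _ A)) dinvE eqxx mul1r.
by [].
Qed.

From mathcomp Require Import zify ring.

Lemma blkC n (J : {set 'I_n.-1}) i j : blk J i j = blk J j i.
Proof. by rewrite /blk minnC maxnC. Qed.

Lemma blk_refl n (J : {set 'I_n.-1}) i : blk J i i.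
Proof. apply/forallP => k; rewrite minnn maxnn; apply/implyP => /andP[h1 h2]; lia. Qed.

Lemma descent (f : nat -> nat) i j : (i <= j)%N -> (f j < f i)%N ->
  exists k, [/\ (i <= k)%N, (k < j)%N & (f k.+1 < f k)%N].
Proof.
elim: j => [|j IH] ij fji.
  by move: ij; rewrite leqn0 => /eqP e; subst; rewrite ltnn in fji.
case: (ltngtP i j.+1) ij => // [ij _|e _]; last by subst; rewrite ltnn in fji.
case: (ltnP (f j.+1) (f j)) => h.
  by exists j; split.
have [k [h1 h2 h3]] := IH ij (leq_ltn_trans h fji).
by exists k; split => //; lia.
Qed.

Lemma tperm_mono n (a b z1 z2 : 'I_n) : nat_of_ord b = (nat_of_ord a).+1 ->
  (z1 < z2)%N -> ~ (z1 = a /\ z2 = b) -> (tperm a b z1 < tperm a b z2)%N.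
Proof.
move=> hb lt nab.
have V : forall x y : 'I_n, x <> y -> nat_of_ord x <> nat_of_ord y by move=> x y h e; apply: h; apply: val_inj.
have nab' : ~ (nat_of_ord z1 = a /\ nat_of_ord z2 = b).
  by case=> e1 e2; apply: nab; split; apply: val_inj.
case: tpermP => [e1|e1|e1 e1']; case: tpermP => [e2|e2|e2 e2'];
  rewrite ?e1 ?e2 in lt nab' *; (try move/V in e1); (try move/V in e1');
  (try move/V in e2); (try move/V in e2'); lia.
Qed.

Lemma len_tperm n (w : 'S_n) (a b : 'I_n) : nat_of_ord b = (nat_of_ord a).+1 ->
  (w b < w a)%N -> (len (tperm a b * w)%g < len w)%N.
Proof.
move=> hb wba; rewrite /len.
set s := tperm a b.
set I' := [set p : 'I_n * 'I_n | _ && _].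
set I := [set p : 'I_n * 'I_n | _ && _].
pose f := fun p : 'I_n * 'I_n => (s p.1, s p.2).
have finj : injective f.
  by move=> [x1 x2] [y1 y2] [/perm_inj -> /perm_inj ->].
have : (#|f @: I'| <= #|I :\ (a, b)|)%N.
  apply: subset_leq_card; apply/subsetP => q /imsetP [[p1 p2] pI ->].
  rewrite !inE /= !permM in pI *; case/andP: pI => lt12 wlt.
  have nab : ~ (p1 = a /\ p2 = b).
    case=> e1 e2; move: wlt; rewrite e1 e2 /s tpermL tpermR => h.
    by move: (ltn_trans h wba); rewrite ltnn.
  rewrite /f /= wlt (tperm_mono hb lt12 nab) !andbT.
  apply/negP => /eqP [e1 e2].
  have e1' : p1 = b by rewrite -(tpermK a b p1) -/s e1 /s tpermL.
  have e2' : p2 = a by rewrite -(tpermK a b p2) -/s e2 /s tpermR.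
  move: lt12; rewrite e1' e2'; lia.
rewrite card_imset // (cardsD1 (a, b) I).
have -> : (a, b) \in I by rewrite !inE /= wba; lia.
lia.
Qed.

Lemma blk_adj n (J : {set 'I_n.-1}) (i j k k1 : 'I_n) : (i < j)%N -> blk J i j ->
  (i <= k)%N -> (k < j)%N -> nat_of_ord k1 = (nat_of_ord k).+1 -> blk J k k1.
Proof.
move=> lij /forallP bij ik kj hk1; apply/forallP => x; apply/implyP => /andP[h1 h2].
have kk1 : (k <= k1)%N by rewrite hk1.
move: h1 h2; rewrite (minn_idPl kk1) (maxn_idPr kk1) => h1 h2.
have /implyP := bij x; apply; rewrite (minn_idPl (ltnW lij)) (maxn_idPr (ltnW lij)).
apply/andP; split; first exact: leq_trans ik h1.
by apply: leq_trans h2 _; rewrite hk1.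
Qed.

Lemma incr n (J J' : {set 'I_n.-1}) (w : 'S_n) (i j : 'I_n) :
  w \in minDCR J' J -> (i < j)%N -> blk J i j -> (w i < w j)%N.
Proof.
move=> wm lij bij; case: (ltnP (w i) (w j)) => // h.
have h' : (w j < w i)%N.
  rewrite ltn_neqAle h andbT; apply/negP => /eqP e.
  have /perm_inj e' : w j = w i by apply: val_inj.
  by move: lij; rewrite e' ltnn.
pose f m := nat_of_ord (w (insubd i m)).
have [k [ik kj fk]] : exists k, [/\ (i <= k)%N, (k < j)%N & (f k.+1 < f k)%N].
  by apply: descent; [exact: ltnW | rewrite /f !valKd].
have kn : (k < n)%N by apply: (ltn_trans kj).
have k1n : (k.+1 < n)%N by apply: (leq_ltn_trans kj).
pose ko := insubd i k; pose kk := insubd i k.+1.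
have eko : nat_of_ord ko = k by rewrite /ko val_insubd kn.
have ekk : nat_of_ord kk = k.+1 by rewrite /kk val_insubd k1n.
have hkk : nat_of_ord kk = (nat_of_ord ko).+1 by rewrite eko ekk.
have wlt : (w kk < w ko)%N by exact: fk.
have W1 : (1%g : 'S_n) \in Wgrp J' by rewrite inE; apply/forallP => x; rewrite perm1 blk_refl.
have Wt : tperm ko kk \in Wgrp J.
  rewrite inE; apply/forallP => x; case: tpermP => [->|->|_ _]; last exact: blk_refl.
    by apply: (blk_adj lij bij) => //; rewrite eko.
  by rewrite blkC; apply: (blk_adj lij bij) => //; rewrite eko.
move: wm; rewrite inE => /forallP/(_ 1%g)/implyP/(_ W1)/forallP/(_ (tperm ko kk))/implyP/(_ Wt).
rewrite mulg1 => hle.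
by have := len_tperm hkk wlt; move=> h2; move: (leq_trans h2 hle); rewrite ltnn.
Qed.

Theorem lemma4p17 (n : nat) (J J' : {set 'I_n.-1}) (nu : 'I_n -> int) (w : 'S_n) :
  cochar_in_center (blk J') nu ->
  dominant (fun _ _ => true) nu ->
  w \in minDCR J' J ->
  [/\ cochar_in_center (Mw_rel J J' w) (cochar_act (w^-1)%g nu),
      dominant (blk J) (cochar_act (w^-1)%g nu) &
      forall (L : fieldType) (O : {pred L}) (pi : L), is_dvr O pi ->
        forall z : 'M[L]_n,
          Zplus (fun _ _ => true) (blk J') O pi z ->
          Zplus (blk J) (Mw_rel J J' w) O pi (conj_inv w z)].
Proof.
move=> hc hdom wm; split.
- by move=> i j /andP[_ b']; rewrite /cochar_act invgK; exact: hc.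
- move=> i j lij bij; rewrite /cochar_act invgK; apply: hdom => //; exact: (incr wm lij bij).
move=> L O pi [[O0 O1 OD ON OM] [Opi _ _]] z [[zd zu zs] zN zY].
have z'E : forall i j, conj_inv w z i j = z (w i) (w j) by move=> i j; exact: conjE.
have znz : forall a, z a a != 0 by move=> a; exact: diag_nz.
have dz' : isdiag (conj_inv w z).
  move=> i j ij; rewrite /= z'E; apply: zd; by rewrite (inj_eq perm_inj).
have uz' : conj_inv w z \in unitmx.
  have h : conj_inv w z *m dinv (conj_inv w z) = 1%:M.
    apply/matrixP => i j; rewrite (diagl _ i j dz') dinvE !z'E !mxE.
    case: (_ == _); last by rewrite mul0r mulr0.
    by rewrite mul1r mulfV.
  by case: (mulmx1_unit h).
have neqF : forall a b : 'I_n, (a < b)%N -> (a == b) = false.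
  by move=> a b ab; apply/negbTE; apply: contraTneq ab => ->; rewrite ltnn.
have ratN : forall a b : 'I_n, (a < b)%N -> ~~ blk J' a b -> z a a * (z b b)^-1 \in O.
  move=> a b ab nb.
  pose X0 : 'M[L]_n := \matrix_(p, q) (if p == q then 1 else if (p == a) && (q == b) then 1 else 0).
  have hX0 : Nrad (fun _ _ => true) (blk J') O X0.
    move=> p q; rewrite mxE; case pq: (p == q) => //.
    case c: [&& _, _ & _]; first by case: ((p == a) && (q == b)).
    case e: ((p == a) && (q == b)) => //; case/andP: e => /eqP e1 /eqP e2; subst.
    by rewrite ab nb in c.
  have := zN X0 hX0 a b; rewrite (conj_entry _ _ _ zd zu) mxE neqF // !eqxx /= ab nb /= mulr1.
  by [].
have ratY : forall a b : 'I_n, (b < a)%N -> ~~ blk J' a b ->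
    exists y0, y0 \in O /\ (z a a)^-1 * pi * z b b = pi * y0.
  move=> a b ab nb.
  pose Y0 : 'M[L]_n := \matrix_(p, q) (if p == q then 1 else if (p == a) && (q == b) then pi else 0).
  have hY0 : Nbar1 (fun _ _ => true) (blk J') O pi Y0.
    move=> p q; rewrite mxE; case pq: (p == q) => //.
    case c: [&& _, _ & _].
      case: ((p == a) && (q == b)); first by exists 1; rewrite mulr1.
      by exists 0; rewrite mulr0.
    case e: ((p == a) && (q == b)) => //; case/andP: e => /eqP e1 /eqP e2; subst.
    by rewrite ab nb in c.
  have := zY Y0 hY0 a b; rewrite (conj_entry' _ _ _ zd zu) mxE.
  have nab : (a == b) = false by rewrite eq_sym neqF.
  by rewrite nab !eqxx /= ab nb /=.
split.
- split => //; by move=> i j /andP[_ b']; rewrite !z'E; apply: zs.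
- move=> X hX i j; rewrite (conj_entry _ _ _ dz' uz') !z'E.
  have := hX i j; case: (eqVneq i j) => [<-|ne].
    by move=> ->; rewrite mulr1 mulfV.
  case: ifP => // [/and3P[lij bij nM] XO|_ ->]; last by rewrite mulr0 mul0r.
  have wlt := incr wm lij bij.
  have nb : ~~ blk J' (w i) (w j) by move: nM; rewrite /Mw_rel bij.
  by rewrite mulrAC; apply: OM => //; apply: ratN.
- move=> Y hY i j; rewrite (conj_entry' _ _ _ dz' uz') !z'E.
  have := hY i j; case: (eqVneq i j) => [<-|ne].
    by move=> ->; rewrite mulr1 mulVf.
  case: ifP => // [/and3P[lji bij nM] [y [yO ->]]|_ ->]; last by rewrite mulr0 mul0r.
  have wlt := incr wm lji (etrans (blkC _ _ _) bij).
  have nb : ~~ blk J' (w i) (w j) by move: nM; rewrite /Mw_rel bij.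
  have [y0 [y0O e0]] := ratY _ _ wlt nb.
  exists (y0 * y); split; first exact: OM.
  transitivity (((z (w i) (w i))^-1 * pi * z (w j) (w j)) * y); first by ring.
  by rewrite e0 mulrA.
Qed.
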